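(* Let $L_{\max},V_{\max},S,N,B,D>0$ and, for vehicle density $\lambda\in[0,L_{\max}]$, let $\mu(\lambda)=\frac{V_{\max}}{S}\left(1-\frac{\lambda}{L_{\max}}\right)$ (linear speed-density relationship $V(\lambda)=V_{\max}(1-\lambda/L_{\max})$, $\mu=V/S$). In the short deadline regime, where the average deadline violation probability is $\exp\left(-\frac{\lambda S}{2N}B\mu(\lambda)^2D^2\right)$, the vehicle density minimizing the average deadline violation probability over $0\le\lambda\le L_{\max}$ is $L^\dagger=\frac{L_{\max}}{3}$.
   Context: $V_{\max}$ is the speed limit, $L_{\max}$ the traffic-jam vehicle density, $S$ the road length, $B$ the number of roadside units, $N$ the number of tasks, $D$ the deadline, and $\mu$ the rate at which a vehicle meets a given roadside unit. *)

(* Defs.v *)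
From Stdlib Require Import Reals.
Open Scope R_scope.

(* Meeting rate of a vehicle with a given RSU under the linear
   speed-density relation V(l) = Vmax (1 - l/Lmax), mu = V/S. *)
Definition mu (Vmax Lmax S lam : R) : R := Vmax / S * (1 - lam / Lmax).

Definition avg_violation (Vmax Lmax S N B D lam : R) : R :=
  exp (- (lam * S / (2 * N) * B * (mu Vmax Lmax S lam) ^ 2 * D ^ 2)).

(* Main.v *)
Require Import Defs.
From Stdlib Require Import Reals Lra Psatz.
Open Scope R_scope.

Lemma av_eq (Lmax Vmax S N B D lam : R) :
  0 < Lmax -> 0 < S -> 0 < N ->
  avg_violation Vmax Lmax S N B D lam =
  exp (- ((B * Vmax^2 * D^2 / (2 * N * S * Lmax^2)) * (lam * (Lmax - lam)^2))).
Proof.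
  intros HL HS HN. unfold avg_violation, mu. f_equal. f_equal. field. lra.
Qed.

Theorem corollary2 (Lmax Vmax S N B D : R) :
  0 < Lmax -> 0 < Vmax -> 0 < S -> 0 < N -> 0 < B -> 0 < D ->
  (0 <= Lmax / 3 <= Lmax) /\
  (forall lam, 0 <= lam <= Lmax ->
     avg_violation Vmax Lmax S N B D (Lmax / 3) <= avg_violation Vmax Lmax S N B D lam) /\
  (forall L, 0 <= L <= Lmax ->
     (forall lam, 0 <= lam <= Lmax ->
        avg_violation Vmax Lmax S N B D L <= avg_violation Vmax Lmax S N B D lam) ->
     L = Lmax / 3).
Proof.
  intros HL HV HS HN HB HD.
  set (K := B * Vmax^2 * D^2 / (2 * N * S * Lmax^2)).
  assert (HK : 0 < K).
  { unfold K. apply Rdiv_lt_0_compat.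
    - repeat apply Rmult_lt_0_compat; try apply pow_lt; lra.
    - repeat apply Rmult_lt_0_compat; try apply pow_lt; lra. }
  assert (Hid : forall x, (Lmax/3) * (Lmax - Lmax/3)^2 - x * (Lmax - x)^2
                  = (x - Lmax/3)^2 * (4*Lmax/3 - x)) by (intros; field).
  split; [lra|split].
  - intros lam Hl. rewrite !av_eq by lra. fold K.
    assert (0 <= (lam - Lmax/3)^2 * (4*Lmax/3 - lam)).
    { apply Rmult_le_pos; [apply pow2_ge_0|lra]. }
    rewrite <- Hid in H.
    destruct (Req_dec (K * (Lmax/3 * (Lmax - Lmax/3)^2)) (K * (lam * (Lmax - lam)^2))) as [E|E].
    + rewrite E; lra.
    + left. apply exp_increasing. nra.
  - intros L HLr Hmin. specialize (Hmin (Lmax/3) ltac:(lra)).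
    rewrite !av_eq in Hmin by lra. fold K in Hmin.
    assert (Hle : - (K * (L * (Lmax - L) ^ 2)) <= - (K * (Lmax / 3 * (Lmax - Lmax / 3) ^ 2))).
    { destruct Hmin as [Hm|Hm]. left; apply exp_lt_inv; exact Hm.
      right; apply exp_inv; exact Hm. }
    specialize (Hid L).
    assert (Hq : (L - Lmax/3)^2 * (4*Lmax/3 - L) <= 0) by nra.
    assert (Hs : (L - Lmax/3)^2 <= 0).
    { apply Rmult_le_reg_r with (4*Lmax/3 - L); [lra|]. lra. }
    nra.
Qed.
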